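(* For every integer $n\geq 2$, the operator $W_n^{*}$ on $H^2$ is mixing; in particular, $W_n^{*}$ is hypercyclic.
   Context: $H^2$ denotes the Hardy space of analytic functions $f(z)=\sum_{k\ge0}\hat f(k)z^k$ on the open unit disk $\mathbb{D}$ with $\|f\|_2^2=\sum_{k\ge0}|\hat f(k)|^2<\infty$, with inner product $\langle f,g\rangle=\sum_k \hat f(k)\overline{\hat g(k)}$. For $n\in\mathbb{N}$, $W_n$ is the bounded weighted composition operator on $H^2$ given by $W_nf(z)=(1+z+\cdots+z^{n-1})f(z^n)$, and $W_n^{*}$ is its Hilbert-space adjoint. An operator $T$ on a separable Banach space $Y$ is mixing if for every pair of non-empty open sets $U,V\subseteq Y$ there is $N$ with $T^k(U)\cap V\neq\emptyset$ for all $k\geq N$; it is hypercyclic if some $f\in Y$ has dense orbit $\{T^kf: k\in\mathbb{N}\}$. *)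

(* Defs.v *)
(* H^2 is represented by the sequences of Taylor
   coefficients (f^(k))_{k>=0} of its elements, as in the definition of H^2. *)
From Stdlib Require Import Reals Arith.
From Coquelicot Require Import Coquelicot.
Open Scope R_scope.

Definition inH2 (f : nat -> C) : Prop :=
  ex_series (fun k => (Cmod (f k)) ^ 2).

Definition h2norm (f : nat -> C) : R :=
  sqrt (Series (fun k => (Cmod (f k)) ^ 2)).

Definition h2dist (f g : nat -> C) : R :=
  h2norm (fun k => Cminus (f k) (g k)).

Definition h2inner (f g : nat -> C) : C :=
  (Series (fun k => Re (Cmult (f k) (Cconj (g k)))),
   Series (fun k => Im (Cmult (f k) (Cconj (g k))))).

(* W_n f (z) = (1 + z + ... + z^(n-1)) f(z^n): in coefficients,
   the coefficient of z^(n k + j), 0 <= j < n, is f^(k); i.e. (W_n f)^(m) = f^(m / n). *)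
Definition W (n : nat) (f : nat -> C) : nat -> C := fun m => f (m / n)%nat.

Definition is_adjoint_H2 (S T : (nat -> C) -> (nat -> C)) : Prop :=
  (forall f, inH2 f -> inH2 (T f)) /\
  (forall f g, inH2 f -> inH2 g -> h2inner (S f) g = h2inner f (T g)).

Definition openH2 (U : (nat -> C) -> Prop) : Prop :=
  (forall f, U f -> inH2 f) /\
  (forall f, U f -> exists eps, 0 < eps /\
     forall g, inH2 g -> h2dist g f < eps -> U g).

Definition mixing (T : (nat -> C) -> (nat -> C)) : Prop :=
  forall U V : (nat -> C) -> Prop,
    openH2 U -> openH2 V -> (exists f, U f) -> (exists g, V g) ->
    exists N : nat, forall k : nat, (N <= k)%nat ->
      exists f, U f /\ V (Nat.iter k T f).

Definition hypercyclic (T : (nat -> C) -> (nat -> C)) : Prop :=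
  exists f, inH2 f /\
    forall g, inH2 g -> forall eps, 0 < eps ->
      exists k : nat, h2dist (Nat.iter k T f) g < eps.

(* Main.v *)
Require Import Defs.
From Stdlib Require Import Reals Arith Lia Lra Psatz FunctionalExtensionality Cantor ZArith.
From Coquelicot Require Import Coquelicot.
Open Scope R_scope.

Fixpoint fsum (f : nat -> R) (K : nat) : R :=
  match K with O => 0 | S K => fsum f K + f K end.

Lemma fsum_ext f g K : (forall i, (i < K)%nat -> f i = g i) -> fsum f K = fsum g K.
Proof. induction K; simpl; intros H; auto. rewrite IHK, H; auto. Qed.

Lemma fsum_le f g K : (forall i, (i < K)%nat -> f i <= g i) -> fsum f K <= fsum g K.
Proof. induction K; simpl; intros H. lra. assert (f K <= g K) by auto.
 assert (fsum f K <= fsum g K) by auto. lra. Qed.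

Lemma fsum_nonneg f K : (forall i, 0 <= f i) -> 0 <= fsum f K.
Proof. intros H; induction K; simpl. lra. specialize (H K); lra. Qed.

Lemma fsum_plus f g K : fsum (fun i => f i + g i) K = fsum f K + fsum g K.
Proof. induction K; simpl. lra. rewrite IHK; lra. Qed.

Lemma fsum_scal c f K : fsum (fun i => c * f i) K = c * fsum f K.
Proof. induction K; simpl. lra. rewrite IHK; lra. Qed.

Lemma fsum_opp f K : fsum (fun i => - f i) K = - fsum f K.
Proof. induction K; simpl. lra. rewrite IHK; lra. Qed.

Lemma fsum_const c K : fsum (fun _ => c) K = INR K * c.
Proof. induction K; simpl fsum. simpl; lra. rewrite IHK, S_INR; lra. Qed.

Lemma fsum_zero K : fsum (fun _ => 0) K = 0.
Proof. rewrite fsum_const; lra. Qed.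

Lemma fsum_split f a b : fsum f (a + b) = fsum f a + fsum (fun j => f (a + j)%nat) b.
Proof. induction b; simpl. rewrite Nat.add_0_r; lra.
 rewrite Nat.add_succ_r; simpl; rewrite IHb; lra. Qed.

Lemma fsum_regroup f B M :
  fsum (fun j => fsum (fun l => f (j * B + l)%nat) B) M = fsum f (M * B).
Proof. induction M; simpl. auto. rewrite IHM. replace (B + M * B)%nat with (M * B + B)%nat by lia. rewrite fsum_split. auto. Qed.

Lemma fsum_mono f K K' : (forall i, 0 <= f i) -> (K <= K')%nat -> fsum f K <= fsum f K'.
Proof. intros H HK. replace K' with (K + (K' - K))%nat by lia. rewrite fsum_split.
 assert (0 <= fsum (fun j => f (K + j)%nat) (K' - K)) by (apply fsum_nonneg; auto). lra. Qed.

Lemma fsum_beyond f L K : (forall i, (L <= i)%nat -> f i = 0) -> (L <= K)%nat -> fsum f K = fsum f L.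
Proof. intros H HK. replace K with (L + (K - L))%nat by lia. rewrite fsum_split.
 rewrite (fsum_ext (fun j => f (L + j)%nat) (fun _ => 0)). rewrite fsum_zero; ring. intros; apply H; lia. Qed.

Lemma fsum_fin_bound f L K : (forall i, (L <= i)%nat -> f i = 0) -> (forall i, 0 <= f i) -> fsum f K <= fsum f L.
Proof. intros H H0. destruct (Nat.le_ge_cases K L). apply fsum_mono; auto.
 rewrite (fsum_beyond f L K); auto; lra. Qed.

Lemma fsum_swap (f : nat -> nat -> R) I J :
  fsum (fun i => fsum (fun j => f i j) J) I = fsum (fun j => fsum (fun i => f i j) I) J.
Proof. induction I; simpl. rewrite fsum_zero; auto. rewrite IHI, <- fsum_plus. auto. Qed.

Definition csum (f : nat -> C) (K : nat) : C :=
  (fsum (fun i => fst (f i)) K, fsum (fun i => snd (f i)) K).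

Definition n2 (z : C) : R := fst z * fst z + snd z * snd z.

Lemma n2_nonneg z : 0 <= n2 z.
Proof. unfold n2; nra. Qed.

Lemma Cmod_sq z : Cmod z ^ 2 = n2 z.
Proof. unfold Cmod, n2. rewrite pow2_sqrt. simpl; ring. simpl; nra. Qed.

Lemma n2_plus_le a b : n2 (Cplus a b) <= 2 * n2 a + 2 * n2 b.
Proof. unfold n2, Cplus; simpl. pose proof (pow2_ge_0 (fst a - fst b)); pose proof (pow2_ge_0 (snd a - snd b)); nra. Qed.

Definition sc (r : R) (z : C) : C := (r * fst z, r * snd z).
Lemma n2_sc r z : n2 (sc r z) = r * r * n2 z.
Proof. unfold n2, sc; simpl; ring. Qed.

Lemma cs_step P p Q u v : 0 <= P -> 0 < p -> 0 <= Q -> n2 u <= P * Q ->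
  n2 (Cplus u v) <= (P + p) * (Q + n2 v / p).
Proof. intros HP Hp HQ Hu. destruct u as [u1 u2], v as [v1 v2]. unfold n2, Cplus in *; simpl in *.
 destruct (Req_dec P 0) as [E|E].
 - subst. assert (u1 = 0) by nra. assert (u2 = 0) by nra. subst.
   replace ((0 + p) * (Q + (v1 * v1 + v2 * v2) / p)) with (p * Q + (v1 * v1 + v2 * v2)) by (field; lra).
   assert (0 <= p*Q) by (apply Rmult_le_pos; lra). lra.
 - assert (0 < P) by lra.
   assert (Hk : (u1 * u1 + u2 * u2) / P <= Q). { apply Rmult_le_reg_l with P; auto. field_simplify; lra. }
   assert ((u1 + v1) * (u1 + v1) + (u2 + v2) * (u2 + v2) <= (P + p) * ((u1 * u1 + u2 * u2) / P + (v1 * v1 + v2 * v2) / p)).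
   { assert (E2 : (P + p) * ((u1 * u1 + u2 * u2) / P + (v1 * v1 + v2 * v2) / p) -
        ((u1 + v1) * (u1 + v1) + (u2 + v2) * (u2 + v2)) = ((p*u1 - P*v1)^2 + (p*u2 - P*v2)^2) / (P * p)) by (field; lra).
     assert (0 <= ((p*u1 - P*v1)^2 + (p*u2 - P*v2)^2) / (P * p)). { apply Rdiv_le_0_compat. apply Rplus_le_le_0_compat; apply pow2_ge_0. apply Rmult_lt_0_compat; lra. }
     lra. }
   assert (0 <= (v1 * v1 + v2 * v2) / p) by (apply Rdiv_le_0_compat; nra).
   assert ((P + p) * ((u1 * u1 + u2 * u2) / P + (v1 * v1 + v2 * v2) / p) <= (P + p) * (Q + (v1 * v1 + v2 * v2) / p)).
   { apply Rmult_le_compat_l; lra. } lra.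
Qed.

Lemma csum_S f K : csum f (S K) = Cplus (csum f K) (f K).
Proof. reflexivity. Qed.

Lemma cs_weighted (f : nat -> C) (p : nat -> R) K : (forall j, 0 < p j) ->
  n2 (csum f K) <= fsum p K * fsum (fun j => n2 (f j) / p j) K.
Proof. intros Hp. induction K.
 - unfold n2, csum; simpl; lra.
 - rewrite csum_S. simpl fsum. apply cs_step; auto.
   apply fsum_nonneg; intros; specialize (Hp i); lra.
   apply fsum_nonneg; intros; apply Rdiv_le_0_compat; [apply n2_nonneg| auto].
Qed.

Lemma cs_uniform (f : nat -> C) K : n2 (csum f K) <= INR K * fsum (fun j => n2 (f j)) K.
Proof. pose proof (cs_weighted f (fun _ => 1) K ltac:(intros; lra)).
 rewrite fsum_const in H. rewrite (fsum_ext _ (fun j => n2 (f j))) in H. lra. intros; field. Qed.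
Lemma fsum_sumf a K : fsum a (S K) = sum_f_R0 a K.
Proof. induction K. simpl; lra. simpl fsum in *. simpl sum_f_R0. rewrite <- IHK. reflexivity. Qed.

Lemma psb_series a B : (forall i, 0 <= a i) -> (forall K, fsum a K <= B) ->
  ex_series a /\ Series a <= B.
Proof. intros H0 HB.
 destruct (ex_finite_lim_seq_incr (sum_f_R0 a) B) as [l Hl].
 - intros; simpl; specialize (H0 (S n)); lra.
 - intros; rewrite <- fsum_sumf; auto.
 - assert (Hs : is_series a l). { apply is_series_Reals. apply is_lim_seq_Reals. auto. }
   split. exists l; auto. rewrite (is_series_unique _ _ Hs).
   assert (Rbar_le l B). { apply (is_lim_seq_le (sum_f_R0 a) (fun _ => B)); auto.
     intros; rewrite <- fsum_sumf; auto. apply is_lim_seq_const. }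
   simpl in H; auto.
Qed.

Lemma series_cv a : ex_series a -> Un_cv (sum_f_R0 a) (Series a).
Proof. intros [l Hl]. rewrite (is_series_unique _ _ Hl). apply is_series_Reals in Hl. exact Hl. Qed.

Lemma fsum_le_series a K : (forall i, 0 <= a i) -> ex_series a -> fsum a K <= Series a.
Proof. intros H0 Hex. pose proof (series_cv a Hex) as Hcv.
 destruct (Rle_or_lt (fsum a K) (Series a)) as [|Hlt]; auto. exfalso.
 destruct (Hcv (fsum a K - Series a)) as [N HN]. lra.
 specialize (HN (max N K) ltac:(lia)). unfold Rdist in HN. rewrite <- fsum_sumf in HN.
 assert (fsum a K <= fsum a (S (max N K))) by (apply fsum_mono; auto; lia).
 apply Rabs_def2 in HN. lra.
Qed.

Lemma series_tail a : ex_series a -> forall d, 0 < d -> exists N, forall K, (N <= K)%nat -> Rabs (fsum a K - Series a) < d.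
Proof. intros Hex d Hd. destruct (series_cv a Hex d) as [N HN]. lra.
 exists (S N). intros K HK. destruct K. lia. rewrite fsum_sumf. apply HN. lia. Qed.

Lemma series_fin a L : (forall i, (L <= i)%nat -> a i = 0) -> Series a = fsum a L.
Proof. intros H. apply is_series_unique. apply is_series_Reals. intros e He. exists L. intros m Hm.
 rewrite <- fsum_sumf. rewrite (fsum_beyond a L (S m)); auto. unfold Rdist. rewrite Rminus_diag, Rabs_R0; lra. Qed.

Lemma inH2_psb f B : (forall K, fsum (fun i => n2 (f i)) K <= B) -> inH2 f.
Proof. intros H. destruct (psb_series (fun i => n2 (f i)) B) as [Hx _]; auto. intros; apply n2_nonneg.
 unfold inH2. apply (ex_series_ext (fun i => n2 (f i))); auto. intros; rewrite Cmod_sq; auto. Qed.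

Lemma inH2_ex f : inH2 f -> ex_series (fun i => n2 (f i)).
Proof. intros H. apply (ex_series_ext (fun i => Cmod (f i) ^ 2)); auto. intros; apply Cmod_sq. Qed.

Lemma inH2_bound f : inH2 f -> forall K, fsum (fun i => n2 (f i)) K <= Series (fun i => n2 (f i)).
Proof. intros H K. apply fsum_le_series. intros; apply n2_nonneg. apply inH2_ex; auto. Qed.

Definition cdiff (f g : nat -> C) := fun i => Cminus (f i) (g i).

Lemma dist_psb f g B eps : 0 < eps -> B < eps ^ 2 ->
  (forall K, fsum (fun i => n2 (Cminus (f i) (g i))) K <= B) -> h2dist f g < eps.
Proof. intros He HB H. destruct (psb_series (fun i => n2 (Cminus (f i) (g i))) B) as [Hx Hs]; auto.
 intros; apply n2_nonneg.
 unfold h2dist, h2norm. rewrite (Series_ext _ (fun i => n2 (Cminus (f i) (g i)))).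
 2: intros; apply Cmod_sq.
 assert (0 <= Series (fun i => n2 (Cminus (f i) (g i)))).
 { apply Rle_trans with (fsum (fun i => n2 (Cminus (f i) (g i))) 0). simpl; lra.
   apply fsum_le_series; auto. intros; apply n2_nonneg. }
 rewrite <- (sqrt_pow2 eps) by lra. apply sqrt_lt_1_alt. lra.
Qed.

Lemma fin_inH2 f L : (forall i, (L <= i)%nat -> f i = (0,0)) -> inH2 f.
Proof. intros H. apply (inH2_psb f (fsum (fun i => n2 (f i)) L)). intros K.
 apply fsum_fin_bound. intros i Hi; rewrite H; auto; unfold n2; simpl; ring. intros; apply n2_nonneg. Qed.
Definition Tx (n : nat) (y : nat -> C) : nat -> C := fun m => csum (fun j => y (n * m + j)%nat) n.
Definition Tk (n k : nat) (y : nat -> C) : nat -> C := fun a => csum (fun l => y (n ^ k * a + l)%nat) (n ^ k).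

Lemma C_eq (a b : C) : fst a = fst b -> snd a = snd b -> a = b.
Proof. destruct a, b; simpl; intros; subst; auto. Qed.

Lemma iter_Tx n k y : Nat.iter k (Tx n) y = Tk n k y.
Proof. induction k.
 - simpl. apply functional_extensionality; intros a. unfold Tk, csum; simpl.
   apply C_eq; simpl; rewrite !Nat.add_0_r; ring.
 - rewrite Nat.iter_succ, IHk. apply functional_extensionality; intros a.
   unfold Tx, Tk, csum; simpl. apply C_eq; simpl.
   + rewrite <- (fsum_regroup (fun i => fst (y (n * n ^ k * a + i)%nat))).
     apply fsum_ext; intros j Hj. apply fsum_ext; intros l Hl. f_equal. f_equal. lia.
   + rewrite <- (fsum_regroup (fun i => snd (y (n * n ^ k * a + i)%nat))).
     apply fsum_ext; intros j Hj. apply fsum_ext; intros l Hl. f_equal. f_equal. lia.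
Qed.

Lemma Tk_comp n a b y : Tk n (a + b) y = Tk n a (Tk n b y).
Proof. rewrite <- !iter_Tx, Nat.iter_add. auto. Qed.

Definition ek (k : nat) : nat -> C := fun i => if Nat.eqb i k then (1,0) else (0,0).

Lemma ek_inH2 k : inH2 (ek k).
Proof. apply (fin_inH2 _ (S k)). intros i Hi. unfold ek. destruct (Nat.eqb_spec i k); auto; lia. Qed.

Lemma series_single (h : nat -> R) k : (forall i, i <> k -> h i = 0) -> Series h = h k.
Proof. intros H. rewrite (series_fin h (S k)). simpl. rewrite (fsum_ext h (fun _ => 0)).
 rewrite fsum_zero; ring. intros; apply H; lia. intros; apply H; lia. Qed.

Section Adj.
Variable hh : C -> C -> R.
Hypothesis hh0 : forall b, hh (0,0) b = 0.

Lemma adj_rhs k z : Series (fun i => hh (ek k i) (z i)) = hh (1,0) (z k).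
Proof. rewrite (series_single _ k). unfold ek; rewrite Nat.eqb_refl; auto.
 intros i Hi. unfold ek. destruct (Nat.eqb_spec i k). lia. auto. Qed.

Lemma adj_lhs n k g : (1 <= n)%nat ->
  Series (fun m => hh (W n (ek k) m) (g m)) = fsum (fun j => hh (1,0) (g (n * k + j)%nat)) n.
Proof. intros Hn. unfold W, ek.
 rewrite (series_fin _ (n * k + n)).
 - rewrite fsum_split. rewrite (fsum_ext _ (fun _ => 0)). rewrite fsum_zero, Rplus_0_l.
   apply fsum_ext. intros j Hj.
   replace ((n * k + j) / n)%nat with k. rewrite Nat.eqb_refl; auto.
   rewrite (Nat.mul_comm n k), Nat.div_add_l by lia. rewrite Nat.div_small by lia. lia.
   intros i Hi. destruct (Nat.eqb_spec (i / n) k); auto.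
   assert (i / n < k)%nat. apply Nat.Div0.div_lt_upper_bound; lia. lia.
 - intros i Hi. destruct (Nat.eqb_spec (i / n) k); auto.
   assert (S k <= i / n)%nat. apply Nat.div_le_lower_bound; lia. lia.
Qed.
End Adj.

Lemma Wstar_eq n Wstar g : (1 <= n)%nat -> is_adjoint_H2 (W n) Wstar -> inH2 g -> Wstar g = Tx n g.
Proof. intros Hn [_ Hadj] Hg. apply functional_extensionality; intros k.
 pose proof (Hadj (ek k) g (ek_inH2 k) Hg) as E. unfold h2inner in E.
 injection E as E1 E2.
 rewrite (adj_lhs (fun a b => fst a * fst b - snd a * - snd b)) in E1; [| intros; simpl; ring | auto].
 rewrite (adj_rhs (fun a b => fst a * fst b - snd a * - snd b)) in E1; [| intros; simpl; ring].
 rewrite (adj_lhs (fun a b => fst a * - snd b + snd a * fst b)) in E2; [| intros; simpl; ring | auto].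
 rewrite (adj_rhs (fun a b => fst a * - snd b + snd a * fst b)) in E2; [| intros; simpl; ring].
 simpl in E1, E2.
 apply C_eq; unfold Tx, csum; simpl.
 - rewrite <- (fsum_ext (fun j => 1 * fst (g (n * k + j)%nat) - 0 * - snd (g (n * k + j)%nat))). lra.
   intros; ring.
 - rewrite <- (fsum_ext (fun j => - (1 * - snd (g (n * k + j)%nat) + 0 * fst (g (n * k + j)%nat)))).
   rewrite fsum_opp. lra. intros; ring.
Qed.

Lemma iter_W n Wstar f : (1 <= n)%nat -> is_adjoint_H2 (W n) Wstar -> inH2 f ->
  forall k, inH2 (Nat.iter k Wstar f) /\ Nat.iter k Wstar f = Tk n k f.
Proof. intros Hn Hadj Hf k. induction k.
 - split. auto. rewrite <- iter_Tx. auto.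
 - destruct IHk as [H1 H2]. rewrite Nat.iter_succ. split. apply (proj1 Hadj); auto.
   rewrite (Wstar_eq n); auto. rewrite H2, <- !iter_Tx, Nat.iter_succ. auto.
Qed.
Ltac nz := first [ lra | apply Rgt_not_eq; lra | apply Rlt_not_eq; lra ].

Definition czero : C := (0, 0).

Definition Rm (n m : nat) (v : nat -> C) : nat -> C := fun i =>
  if Nat.ltb i (n ^ m) then
    (if Nat.ltb i (n ^ (m - 1)) then czero else sc (/ (INR (n ^ m) - INR (n ^ (m - 1)))) (v 0%nat))
  else sc (/ INR (n ^ m)) (v (i / n ^ m)%nat).

Lemma pow_split n m : (1 <= m)%nat -> (n ^ m = n * n ^ (m - 1))%nat.
Proof. intros H. destruct m. lia. simpl. rewrite Nat.sub_0_r. auto. Qed.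

Lemma pow_pos n m : (1 <= n)%nat -> (1 <= n ^ m)%nat.
Proof. intros H. induction m; simpl; lia. Qed.

Lemma pow_facts n m : (2 <= n)%nat -> (1 <= m)%nat ->
  (1 <= n ^ (m - 1))%nat /\ (2 * n ^ (m - 1) <= n ^ m)%nat.
Proof. intros Hn Hm. rewrite (pow_split n m Hm). pose proof (pow_pos n (m - 1)). split; nia. Qed.

Lemma fsum_split' f h N : (h <= N)%nat -> fsum f N = fsum f h + fsum (fun j => f (h + j)%nat) (N - h).
Proof. intros H. rewrite <- fsum_split. f_equal. lia. Qed.

Section Proj.
Variable pi : C -> R.
Hypothesis pi_sc : forall r z, pi (sc r z) = r * pi z.
Hypothesis pi_0 : pi czero = 0.

Lemma TkR_comp n m v a : (2 <= n)%nat -> (1 <= m)%nat ->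
  fsum (fun l => pi (Rm n m v (n ^ m * a + l)%nat)) (n ^ m) = pi (v a).
Proof. intros Hn Hm. destruct (pow_facts n m Hn Hm) as [H1 H2].
 set (N := (n ^ m)%nat) in *. set (h := (n ^ (m - 1))%nat) in *.
 assert (HN : INR h < INR N) by (apply lt_INR; lia). pose proof (pos_INR h).
 destruct a.
 - rewrite (fsum_split' _ h N) by lia.
   rewrite (fsum_ext _ (fun _ => 0)). rewrite fsum_zero.
   rewrite (fsum_ext _ (fun _ => / (INR N - INR h) * pi (v 0%nat))). rewrite fsum_const.
   rewrite minus_INR by lia. field; nz.
   intros j Hj. unfold Rm. fold N h. replace (N * 0 + (h + j))%nat with (h + j)%nat by lia.
   destruct (Nat.ltb_spec (h + j) N); [|lia]. destruct (Nat.ltb_spec (h + j) h); [lia|]. auto.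
   intros j Hj. unfold Rm. fold N h. replace (N * 0 + j)%nat with j by lia.
   destruct (Nat.ltb_spec j N); [|lia]. destruct (Nat.ltb_spec j h); [|lia]. auto.
 - rewrite (fsum_ext _ (fun _ => / INR N * pi (v (S a)))). rewrite fsum_const. field; nz.
   intros l Hl. unfold Rm. fold N. destruct (Nat.ltb_spec (N * S a + l) N). nia.
   rewrite pi_sc. f_equal. f_equal. f_equal. rewrite Nat.mul_comm, Nat.div_add_l by lia.
   rewrite Nat.div_small by lia. lia.
Qed.

Lemma annih_comp n d v L a : (forall i, (L <= i)%nat -> v i = czero) -> fsum (fun i => pi (v i)) L = 0 ->
  (L <= n ^ d)%nat -> (1 <= n)%nat -> fsum (fun l => pi (v (n ^ d * a + l)%nat)) (n ^ d) = 0.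
Proof. intros Hv Hs HL Hn. destruct a.
 - rewrite (fsum_ext _ (fun l => pi (v l))). rewrite (fsum_beyond _ L); auto.
   intros; rewrite Hv; auto. intros; f_equal; f_equal; lia.
 - rewrite (fsum_ext _ (fun _ => 0)). apply fsum_zero. intros; rewrite Hv; auto. nia.
Qed.
End Proj.

Lemma fst_sc r z : fst (sc r z) = r * fst z. Proof. reflexivity. Qed.
Lemma snd_sc r z : snd (sc r z) = r * snd z. Proof. reflexivity. Qed.

Lemma TkR n m v : (2 <= n)%nat -> (1 <= m)%nat -> Tk n m (Rm n m v) = v.
Proof. intros Hn Hm. apply functional_extensionality; intros a. unfold Tk, csum. apply C_eq; simpl.
 apply (TkR_comp fst); auto. apply (TkR_comp snd); auto. Qed.

Lemma annih n d v L : (forall i, (L <= i)%nat -> v i = czero) -> csum v L = czero ->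
  (L <= n ^ d)%nat -> (1 <= n)%nat -> Tk n d v = fun _ => czero.
Proof. intros Hv Hs HL Hn. apply functional_extensionality; intros a. unfold Tk, csum. unfold csum in Hs.
 injection Hs as Hs1 Hs2. apply C_eq; simpl.
 apply (annih_comp fst) with L; auto. apply (annih_comp snd) with L; auto. Qed.

Lemma R_low n m v i : (2 <= n)%nat -> (1 <= m)%nat -> (i < n ^ (m - 1))%nat -> Rm n m v i = czero.
Proof. intros Hn Hm Hi. destruct (pow_facts n m Hn Hm). unfold Rm.
 destruct (Nat.ltb_spec i (n ^ m)); [|lia]. destruct (Nat.ltb_spec i (n ^ (m - 1))); [|lia]. auto. Qed.

Lemma sc_zero r : sc r czero = czero.
Proof. unfold sc, czero; simpl; apply C_eq; simpl; ring. Qed.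

Lemma R_high n m v L i : (2 <= n)%nat -> (forall a, (L <= a)%nat -> v a = czero) -> (n ^ m * L <= i)%nat ->
  Rm n m v i = czero.
Proof. intros Hn Hv Hi. pose proof (pow_pos n m ltac:(lia)). unfold Rm.
 destruct (Nat.ltb_spec i (n ^ m)).
 - assert (L = 0)%nat by nia. subst. rewrite Hv by lia. destruct (i <? n ^ (m - 1))%nat; auto. apply sc_zero.
 - rewrite Hv. apply sc_zero. apply Nat.div_le_lower_bound; lia.
Qed.

Lemma R_block n m v a : (2 <= n)%nat -> (1 <= m)%nat ->
  fsum (fun l => n2 (Rm n m v (a * n ^ m + l)%nat)) (n ^ m) <= 2 / INR (n ^ m) * n2 (v a).
Proof. intros Hn Hm. destruct (pow_facts n m Hn Hm) as [H1 H2].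
 set (N := (n ^ m)%nat) in *. set (h := (n ^ (m - 1))%nat) in *.
 assert (HN : INR h < INR N) by (apply lt_INR; lia).
 assert (Hh : 1 <= INR h) by (apply (le_INR 1); lia).
 assert (H2' : INR (2 * h) <= INR N) by (apply le_INR; lia). rewrite mult_INR in H2'. simpl in H2'.
 pose proof (n2_nonneg (v a)).
 destruct a.
 - rewrite (fsum_split' _ h N) by lia.
   rewrite (fsum_ext _ (fun _ => 0)). rewrite fsum_zero.
   rewrite (fsum_ext _ (fun _ => / (INR N - INR h) * / (INR N - INR h) * n2 (v 0%nat))). rewrite fsum_const.
   rewrite minus_INR by lia.
   replace (0 + (INR N - INR h) * (/ (INR N - INR h) * / (INR N - INR h) * n2 (v 0%nat)))
     with (n2 (v 0%nat) / (INR N - INR h)) by (field; nz).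
   assert (Hi : / (INR N - INR h) <= 2 / INR N).
   { replace (2 / INR N) with (/ (INR N / 2)) by (field; nz). apply Rinv_le_contravar; lra. }
   unfold Rdiv at 1. rewrite Rmult_comm. apply Rmult_le_compat_r; auto.
   intros j Hj. unfold Rm. fold N h. replace (0 * N + (h + j))%nat with (h + j)%nat by lia.
   destruct (Nat.ltb_spec (h + j) N); [|lia]. destruct (Nat.ltb_spec (h + j) h); [lia|]. apply n2_sc.
   intros j Hj. unfold Rm. fold N h. replace (0 * N + j)%nat with j by lia.
   destruct (Nat.ltb_spec j N); [|lia]. destruct (Nat.ltb_spec j h); [|lia]. unfold n2, czero; simpl; ring.
 - rewrite (fsum_ext _ (fun _ => / INR N * / INR N * n2 (v (S a)))). rewrite fsum_const.
   replace (INR N * (/ INR N * / INR N * n2 (v (S a)))) with (1 / INR N * n2 (v (S a))) by (field; nz).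
   apply Rmult_le_compat_r. auto. unfold Rdiv. apply Rmult_le_compat_r. left; apply Rinv_0_lt_compat; lra. lra.
   intros l Hl. unfold Rm. fold N. destruct (Nat.ltb_spec (S a * N + l) N). nia.
   rewrite n2_sc. replace ((S a * N + l) / N)%nat with (S a). auto.
   rewrite Nat.div_add_l by lia. rewrite Nat.div_small by lia. lia.
Qed.

Lemma R_norm n m v L K : (2 <= n)%nat -> (1 <= m)%nat -> (forall a, (L <= a)%nat -> v a = czero) ->
  fsum (fun i => n2 (Rm n m v i)) K <= 2 / INR (n ^ m) * fsum (fun i => n2 (v i)) L.
Proof. intros Hn Hm Hv.
 apply Rle_trans with (fsum (fun i => n2 (Rm n m v i)) (L * n ^ m)).
 apply fsum_fin_bound. intros i Hi. rewrite (R_high n m v L); auto. unfold n2, czero; simpl; ring. lia.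
 intros; apply n2_nonneg.
 rewrite <- fsum_regroup. rewrite <- fsum_scal. apply fsum_le. intros a Ha. apply R_block; auto.
Qed.

Lemma Tk_plus n k f g : Tk n k (fun i => Cplus (f i) (g i)) = fun a => Cplus (Tk n k f a) (Tk n k g a).
Proof. apply functional_extensionality; intros a. unfold Tk, csum. apply C_eq; simpl; apply fsum_plus. Qed.

Lemma Tk_csum n k (F : nat -> nat -> C) J a :
  Tk n k (fun i => csum (fun j => F j i) J) a = csum (fun j => Tk n k (F j) a) J.
Proof. unfold Tk, csum. apply C_eq; simpl; apply fsum_swap. Qed.
Definition zr (p : nat) : R := if Nat.even p then INR (Nat.div2 p) else - INR (S (Nat.div2 p)).
Definition code_of_Z (z : Z) : nat :=
  match z with Z0 => O | Zpos q => (2 * Pos.to_nat q)%nat | Zneg q => S (2 * (Pos.to_nat q - 1)) end.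

Lemma zr_code z : zr (code_of_Z z) = IZR z.
Proof. destruct z as [|q|q]; unfold zr, code_of_Z.
 - simpl; auto.
 - rewrite Nat.even_even, Nat.div2_double. rewrite INR_IZR_INZ, positive_nat_Z. auto.
 - rewrite Nat.even_succ, Nat.odd_even, Nat.div2_succ_double. rewrite IZR_NEG.
   pose proof (Pos2Nat.is_pos q). replace (S (Pos.to_nat q - 1)) with (Pos.to_nat q) by lia.
   rewrite INR_IZR_INZ, positive_nat_Z. auto.
Qed.

Definition cq (a : nat) : C :=
  (zr (fst (of_nat a)) / INR (S (snd (of_nat (snd (of_nat a))))),
   zr (fst (of_nat (snd (of_nat a)))) / INR (S (snd (of_nat (snd (of_nat a)))))).

Definition acode (z : C) (d : nat) : nat :=
  to_nat (code_of_Z (up (fst z * INR (S d))), to_nat (code_of_Z (up (snd z * INR (S d))), d)).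

Lemma up_approx x D : 0 < D -> Rabs (IZR (up (x * D)) / D - x) <= 1 / D.
Proof. intros HD. destruct (archimed (x * D)) as [H1 H2].
 replace (IZR (up (x * D)) / D - x) with ((IZR (up (x * D)) - x * D) / D) by (field; nz).
 unfold Rdiv. rewrite Rabs_mult, Rabs_right. rewrite Rabs_right. apply Rmult_le_compat_r.
 left; apply Rinv_0_lt_compat; lra. lra. left; apply Rinv_0_lt_compat; lra. lra.
Qed.

Lemma acode_spec z d : n2 (Cminus (cq (acode z d)) z) <= 2 / (INR (S d) * INR (S d)).
Proof. unfold cq, acode. rewrite cancel_of_to; cbn [fst snd]; rewrite cancel_of_to; cbn [fst snd]. rewrite !zr_code.
 set (D := INR (S d)). assert (HD : 0 < D) by (apply lt_0_INR; lia).
 pose proof (up_approx (fst z) D HD) as E1. pose proof (up_approx (snd z) D HD) as E2.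
 unfold n2, Cminus, Cplus, Copp; cbn [fst snd].
 set (a := IZR (up (fst z * D)) / D - fst z) in *. set (b := IZR (up (snd z * D)) / D - snd z) in *.
 replace (IZR (up (fst z * D)) / D + - fst z) with a by (unfold a; ring).
 replace (IZR (up (snd z * D)) / D + - snd z) with b by (unfold b; ring).
 assert (a * a <= 1 / D * (1 / D)). { replace (a * a) with (Rabs a * Rabs a) by (rewrite <- Rabs_mult; rewrite Rabs_right; [ring | nra]). pose proof (Rabs_pos a).
   apply Rmult_le_compat; auto. } 
 assert (b * b <= 1 / D * (1 / D)). { replace (b * b) with (Rabs b * Rabs b) by (rewrite <- Rabs_mult; rewrite Rabs_right; [ring | nra]). pose proof (Rabs_pos b).
   apply Rmult_le_compat; auto. }
 replace (2 / (D * D)) with (1 / D * (1 / D) + 1 / D * (1 / D)) by (field; nz). lra.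
Qed.

Definition ent (r i : nat) : nat := fst (of_nat (Nat.iter i (fun r => snd (of_nat r)) r)).

Lemma ent_surj (h : nat -> nat) N : exists r, forall i, (i < N)%nat -> ent r i = h i.
Proof. revert h; induction N; intros h.
 - exists O; intros; lia.
 - destruct (IHN (fun i => h (S i))) as [r' Hr']. exists (to_nat (h O, r')).
   intros i Hi. destruct i.
   + unfold ent. change (fst (of_nat (to_nat (h 0%nat, r'))) = h 0%nat). rewrite cancel_of_to; auto.
   + unfold ent. rewrite Nat.iter_succ_r. rewrite cancel_of_to. cbn [snd]. apply Hr'. lia.
Qed.

Definition phiN c := fst (of_nat c).
Definition phiM c := fst (of_nat (snd (of_nat c))).
Definition phir c := snd (of_nat (snd (of_nat c))).
Definition phiq c i := cq (ent (phir c) i).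
Definition phis c := csum (phiq c) (phiN c).
Definition phi (c : nat) : nat -> C := fun i =>
  if Nat.ltb i (phiN c) then phiq c i
  else if Nat.ltb i (phiN c + S (phiM c)) then sc (- / INR (S (phiM c))) (phis c) else czero.
Definition Lphi c := (phiN c + S (phiM c))%nat.

Lemma phi_supp c i : (Lphi c <= i)%nat -> phi c i = czero.
Proof. unfold Lphi, phi; intros H. destruct (Nat.ltb_spec i (phiN c)). lia.
 destruct (Nat.ltb_spec i (phiN c + S (phiM c))). lia. auto. Qed.

Section Proj2.
Variable pi : C -> R.
Hypothesis pi_sc : forall r z, pi (sc r z) = r * pi z.
Lemma phi_sum_comp c (Hs : fsum (fun i => pi (phiq c i)) (phiN c) = pi (phis c)) :
  fsum (fun i => pi (phi c i)) (Lphi c) = 0.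
Proof. unfold Lphi. rewrite fsum_split.
 rewrite (fsum_ext _ (fun i => pi (phiq c i))). rewrite Hs.
 rewrite (fsum_ext _ (fun _ => - / INR (S (phiM c)) * pi (phis c))). rewrite fsum_const.
 field. apply not_0_INR; lia.
 intros j Hj. unfold phi. destruct (Nat.ltb_spec (phiN c + j) (phiN c)). lia.
 destruct (Nat.ltb_spec (phiN c + j) (phiN c + S (phiM c))). 2: lia. apply pi_sc.
 intros j Hj. unfold phi. destruct (Nat.ltb_spec j (phiN c)). auto. lia.
Qed.
End Proj2.

Lemma phi_sum c : csum (phi c) (Lphi c) = czero.
Proof. unfold csum. apply C_eq; simpl. apply (phi_sum_comp fst); auto. apply (phi_sum_comp snd); auto. Qed.
Lemma INR_up_bound X : exists d : nat, X < INR d.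
Proof. destruct (archimed X) as [H1 H2]. destruct (Z_le_gt_dec 0 (up X)) as [Hz|Hz].
 - exists (Z.to_nat (up X)). rewrite INR_IZR_INZ, Z2Nat.id; auto.
 - exists O. simpl. apply Rlt_trans with (IZR (up X)); auto. apply IZR_lt. lia.
Qed.

Lemma div_le a b c : 0 < c -> a <= b * c -> a / c <= b.
Proof. intros Hc H. unfold Rdiv. apply Rmult_le_reg_r with c; auto.
 rewrite Rmult_assoc, Rinv_l, Rmult_1_r; lra. Qed.

Lemma lt_div a b c : 0 < b -> a / b < c -> a < c * b.
Proof. intros Hb H. apply Rmult_lt_compat_r with (r := b) in H; auto.
 unfold Rdiv in H. rewrite Rmult_assoc, Rinv_l, Rmult_1_r in H; lra. Qed.

Lemma tail_small g : inH2 g -> forall d, 0 < d -> exists N0, forall K,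
  fsum (fun i => if Nat.ltb i N0 then 0 else n2 (g i)) K <= d.
Proof. intros Hg d Hd. pose proof (inH2_ex g Hg) as Hex.
 destruct (series_tail _ Hex d Hd) as [N0 HN]. exists N0. intros K.
 set (t := fun i => if Nat.ltb i N0 then 0 else n2 (g i)).
 assert (Ht0 : forall i, 0 <= t i). { intros; unfold t; destruct (i <? N0)%nat; [lra | apply n2_nonneg]. }
 apply Rle_trans with (fsum t (N0 + K)). apply fsum_mono; auto; lia.
 rewrite fsum_split. rewrite (fsum_ext t (fun _ => 0)). rewrite fsum_zero, Rplus_0_l.
 2: { intros i Hi; unfold t. destruct (Nat.ltb_spec i N0); lia || auto. }
 rewrite (fsum_ext _ (fun j => n2 (g (N0 + j)%nat))).
 2: { intros i Hi; unfold t. destruct (Nat.ltb_spec (N0 + i) N0); [lia | auto]. }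
 pose proof (fsum_split (fun i => n2 (g i)) N0 K) as E.
 pose proof (inH2_bound g Hg (N0 + K)) as B. specialize (HN N0 (le_n _)).
 apply Rabs_def2 in HN. lra.
Qed.

Lemma n2_Copp z : n2 (Copp z) = n2 z.
Proof. unfold n2, Copp; simpl; ring. Qed.

Lemma n2_minus_le a b : n2 (Cminus a b) <= 2 * n2 a + 2 * n2 b.
Proof. unfold Cminus. rewrite <- (n2_Copp b). apply n2_plus_le. Qed.

Lemma phi_dense g : inH2 g -> forall eps, 0 < eps -> exists c, forall K,
  fsum (fun i => n2 (Cminus (phi c i) (g i))) K <= eps.
Proof. intros Hg eps He.
 set (dl := eps / 8). assert (Hdl : 0 < dl) by (unfold dl; lra).
 destruct (tail_small g Hg dl Hdl) as [N0 HT].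
 destruct (INR_up_bound (2 * INR N0 / dl)) as [d Hd].
 destruct (ent_surj (fun i => acode (g i) d) N0) as [r Hr].
 set (s := csum (fun i => cq (ent r i)) N0).
 destruct (INR_up_bound (2 * n2 s / dl)) as [M HM].
 exists (to_nat (N0, to_nat (M, r))). set (c := to_nat (N0, to_nat (M, r))).
 assert (EN : phiN c = N0) by (unfold phiN, c; rewrite cancel_of_to; auto).
 assert (EM : phiM c = M) by (unfold phiM, c; rewrite cancel_of_to; cbn [snd]; rewrite cancel_of_to; auto).
 assert (Er : phir c = r) by (unfold phir, c; rewrite cancel_of_to; cbn [snd]; rewrite cancel_of_to; auto).
 assert (Es : phis c = s). { unfold phis, s. rewrite EN. unfold phiq. rewrite Er. auto. }
 intros K.
 set (D := INR (S d)). set (Mm := INR (S M)).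
 assert (HD : INR d < D) by (unfold D; rewrite S_INR; lra).
 assert (HMm : INR M < Mm) by (unfold Mm; rewrite S_INR; lra).
 pose proof (pos_INR d). pose proof (pos_INR M). pose proof (pos_INR N0). pose proof (n2_nonneg s).
 set (p1 := fun i => if Nat.ltb i N0 then 2 / (D * D) else 0).
 set (p2 := fun i => if Nat.ltb i N0 then 0 else if Nat.ltb i (N0 + S M) then 2 * (- / Mm * - / Mm * n2 s) else 0).
 set (t := fun i => if Nat.ltb i N0 then 0 else n2 (g i)).
 apply Rle_trans with (fsum (fun i => p1 i + p2 i + 2 * t i) K).
 - apply fsum_le. intros i _. unfold p1, p2, t, phi. rewrite EN, EM, Es.
   destruct (Nat.ltb_spec i N0).
   + unfold phiq. rewrite Er, Hr by auto. pose proof (acode_spec (g i) d). fold D in H4. lra.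
   + destruct (Nat.ltb_spec i (N0 + S M)).
     * pose proof (n2_minus_le (sc (- / Mm) s) (g i)). rewrite n2_sc in H5. fold Mm. lra.
     * unfold Cminus. rewrite n2_plus_le. unfold czero, n2, Copp; simpl. pose proof (n2_nonneg (g i)).
       unfold n2 in H5. lra. 
 - rewrite !fsum_plus, fsum_scal.
   assert (B1 : fsum p1 K <= dl).
   { apply Rle_trans with (fsum p1 N0). apply fsum_fin_bound.
     intros i Hi; unfold p1; destruct (Nat.ltb_spec i N0); lia || auto.
     intros i; unfold p1; destruct (i <? N0)%nat. apply Rlt_le, Rdiv_lt_0_compat. lra. nra. lra.
     rewrite (fsum_ext _ (fun _ => 2 / (D * D))). rewrite fsum_const.
     2: { intros i Hi; unfold p1; destruct (Nat.ltb_spec i N0); lia || auto. }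
     apply lt_div in Hd; auto. replace (INR N0 * (2 / (D * D))) with ((2 * INR N0) / (D * D)) by (field; nz).
     assert (D1 : 1 <= D) by (unfold D; rewrite S_INR; lra).
     apply div_le. apply Rmult_lt_0_compat; lra.
     assert (dl * D <= dl * D * D) by (rewrite <- (Rmult_1_r (dl * D)) at 1; apply Rmult_le_compat_l; [apply Rmult_le_pos|]; lra).
     assert (INR d * dl <= D * dl) by (apply Rmult_le_compat_r; lra). nra. }
   assert (B2 : fsum p2 K <= dl).
   { apply Rle_trans with (fsum p2 (N0 + S M)). apply fsum_fin_bound.
     intros i Hi; unfold p2; destruct (Nat.ltb_spec i N0); destruct (Nat.ltb_spec i (N0 + S M)); lia || auto.
     intros i; unfold p2; destruct (i <? N0)%nat. lra. destruct (i <? N0 + S M)%nat. 2: lra.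
     apply Rmult_le_pos. lra. apply Rmult_le_pos; auto. nra.
     rewrite fsum_split. rewrite (fsum_ext p2 (fun _ => 0)), fsum_zero.
     2: { intros i Hi; unfold p2; destruct (Nat.ltb_spec i N0); lia || auto. }
     rewrite (fsum_ext _ (fun _ => 2 * (- / Mm * - / Mm * n2 s))), fsum_const.
     2: { intros i Hi; unfold p2; destruct (Nat.ltb_spec (N0 + i) N0); [lia|].
          destruct (Nat.ltb_spec (N0 + i) (N0 + S M)); lia || auto. }
     fold Mm. apply lt_div in HM; auto.
     replace (0 + Mm * (2 * (- / Mm * - / Mm * n2 s))) with ((2 * n2 s) / Mm) by (field; nz).
     apply div_le. lra. assert (INR M * dl <= Mm * dl) by (apply Rmult_le_compat_r; lra). lra. }
   specialize (HT K). fold t in HT. unfold dl in *. lra.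
Qed.
Lemma pow_big n X : (2 <= n)%nat -> exists d, X < INR (n ^ d).
Proof. intros Hn. destruct (INR_up_bound X) as [d Hd]. exists d.
 apply Rlt_trans with (INR d); auto. apply lt_INR. apply Nat.pow_gt_lin_r. lia. Qed.

Lemma pow_mono n a b : (1 <= n)%nat -> (a <= b)%nat -> INR (n ^ a) <= INR (n ^ b).
Proof. intros. apply le_INR. apply Nat.pow_le_mono_r; lia. Qed.

Lemma phi_inH2 c : inH2 (phi c).
Proof. apply (fin_inH2 _ (Lphi c)). intros; apply phi_supp; auto. Qed.

Lemma minus_plus_C a b c : Cminus (Cplus a b) c = Cplus (Cminus a c) b.
Proof. apply C_eq; simpl; ring. Qed.

Lemma mixing_main n Wstar : (2 <= n)%nat -> is_adjoint_H2 (W n) Wstar -> mixing Wstar.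
Proof. intros Hn Hadj U V [HU1 HU2] [HV1 HV2] [u0 Hu0] [v0 Hv0].
 destruct (HU2 u0 Hu0) as [e1 [He1 HUb]]. destruct (HV2 v0 Hv0) as [e2 [He2 HVb]].
 assert (E1 : 0 < e1 ^ 2) by (apply pow_lt; lra). assert (E2 : 0 < e2 ^ 2) by (apply pow_lt; lra).
 destruct (phi_dense u0 (HU1 _ Hu0) (e1 ^ 2 / 8)) as [cu Hcu]. lra.
 destruct (phi_dense v0 (HV1 _ Hv0) (e2 ^ 2 / 2)) as [cv Hcv]. lra.
 set (u := phi cu) in *. set (v := phi cv) in *.
 assert (Vv : V v). { apply HVb. apply phi_inH2. apply (dist_psb _ _ (e2 ^ 2 / 2)); auto; lra. }
 set (Sv := fsum (fun i => n2 (v i)) (Lphi cv)).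
 assert (HSv : 0 <= Sv) by (apply fsum_nonneg; intros; apply n2_nonneg).
 set (Su := fsum (fun i => n2 (u i)) (Lphi cu)).
 destruct (pow_big n (INR (Lphi cu) + 16 * Sv / e1 ^ 2 + 1) Hn) as [N HN].
 exists (S N). intros k Hk.
 assert (Hk1 : (1 <= k)%nat) by lia.
 assert (HNk : INR (n ^ N) <= INR (n ^ k)) by (apply pow_mono; lia).
 assert (Hpos : 0 < INR (n ^ k)) by (apply lt_0_INR; pose proof (pow_pos n k); lia).
 assert (HL : (Lphi cu <= n ^ k)%nat).
 { apply INR_le. assert (0 <= 16 * Sv / e1 ^ 2) by (apply Rdiv_le_0_compat; lra). lra. }
 assert (HR : 2 * (2 / INR (n ^ k) * Sv) <= e1 ^ 2 / 2).
 { assert (16 * Sv / e1 ^ 2 < INR (n ^ k)). { assert (0 <= INR (Lphi cu)) by apply pos_INR. lra. }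
   apply lt_div in H; auto.
   replace (2 * (2 / INR (n ^ k) * Sv)) with ((4 * Sv) / INR (n ^ k)) by (field; nz).
   apply div_le; auto. lra. }
 set (f := fun i => Cplus (u i) (Rm n k v i)).
 assert (Hvs : forall a, (Lphi cv <= a)%nat -> v a = czero) by (intros; apply phi_supp; auto).
 assert (Hf : inH2 f).
 { apply (inH2_psb f (2 * Su + 2 * (2 / INR (n ^ k) * Sv))). intros K.
   apply Rle_trans with (fsum (fun i => 2 * n2 (u i) + 2 * n2 (Rm n k v i)) K).
   apply fsum_le; intros; apply n2_plus_le. rewrite fsum_plus, !fsum_scal.
   pose proof (R_norm n k v (Lphi cv) K Hn Hk1 Hvs).
   assert (fsum (fun i => n2 (u i)) K <= Su). { apply fsum_fin_bound. intros; unfold u; rewrite phi_supp; auto.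
     unfold n2, czero; simpl; ring. intros; apply n2_nonneg. }
   fold Sv in H. lra. }
 exists f. split.
 - apply HUb; auto. apply (dist_psb _ _ (e1 ^ 2 / 4 + e1 ^ 2 / 2)); auto. lra.
   intros K. apply Rle_trans with (fsum (fun i => 2 * n2 (Cminus (u i) (u0 i)) + 2 * n2 (Rm n k v i)) K).
   apply fsum_le; intros; unfold f; rewrite minus_plus_C; apply n2_plus_le.
   rewrite fsum_plus, !fsum_scal. pose proof (R_norm n k v (Lphi cv) K Hn Hk1 Hvs).
   specialize (Hcu K). fold Sv in H. lra.
 - destruct (iter_W n Wstar f ltac:(lia) Hadj Hf k) as [_ ->].
   unfold f. rewrite Tk_plus. rewrite (annih n k u (Lphi cu)); auto.
   2: intros; apply phi_supp; auto. 2: apply phi_sum. 2: lia.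
   rewrite TkR; auto. replace (fun a => Cplus czero (v a)) with v; auto.
   apply functional_extensionality; intros a; apply C_eq; unfold czero; simpl; ring.
Qed.
Lemma INR_Zto z : IZR z <= INR (Z.to_nat z).
Proof. destruct (Z_le_gt_dec 0 z). rewrite INR_IZR_INZ, Z2Nat.id; [lra | lia].
 pose proof (pos_INR (Z.to_nat z)). assert (IZR z < 0) by (apply IZR_lt; lia). lra. Qed.

Lemma geom_full K : fsum (fun j => / 2 ^ j) K <= 2.
Proof. assert (forall K, fsum (fun j => / 2 ^ j) K = 2 - 2 * / 2 ^ K).
 { induction K0; simpl fsum. simpl; field. rewrite IHK0. simpl. field. apply pow_nonzero; lra. }
 rewrite H. assert (0 < / 2 ^ K) by (apply Rinv_0_lt_compat, pow_lt; lra). lra. Qed.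

Lemma geom_tail i K : fsum (fun j => if Nat.ltb i j then / 2 ^ j else 0) K <= / 2 ^ i.
Proof. set (f := fun j => if Nat.ltb i j then / 2 ^ j else 0).
 assert (Hf : forall j, 0 <= f j). { intros; unfold f; destruct (i <? j)%nat; [left; apply Rinv_0_lt_compat, pow_lt|]; lra. }
 apply Rle_trans with (fsum f (S i + K)). apply fsum_mono; auto; lia.
 rewrite fsum_split. rewrite (fsum_ext f (fun _ => 0)), fsum_zero.
 2: { intros j Hj; unfold f; destruct (Nat.ltb_spec i j); lia || auto. }
 rewrite (fsum_ext _ (fun j => / 2 ^ S i * / 2 ^ j)). rewrite fsum_scal.
 2: { intros j Hj; unfold f; destruct (Nat.ltb_spec i (S i + j)); [|lia]. rewrite pow_add. rewrite Rinv_mult. auto. }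
 pose proof (geom_full K). assert (0 < / 2 ^ S i) by (apply Rinv_0_lt_compat, pow_lt; lra).
 replace (/ 2 ^ i) with (/ 2 ^ S i * 2) by (simpl; field; apply pow_nonzero; lra).
 assert (/ 2 ^ S i * fsum (fun j => / 2 ^ j) K <= / 2 ^ S i * 2) by (apply Rmult_le_compat_l; lra). lra.
Qed.

Lemma csum_beyond f L K : (forall i, (L <= i)%nat -> f i = czero) -> (L <= K)%nat -> csum f K = csum f L.
Proof. intros H HK. unfold csum. apply C_eq; simpl; apply fsum_beyond; auto; intros i Hi; rewrite H; auto. Qed.

Lemma csum_plus f g K : csum (fun j => Cplus (f j) (g j)) K = Cplus (csum f K) (csum g K).
Proof. unfold csum; apply C_eq; simpl; apply fsum_plus. Qed.

Section Hyper.
Variable n : nat.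
Hypothesis Hn : (2 <= n)%nat.

Definition psi j := phi (fst (of_nat j)).
Definition Lpsi j := Lphi (fst (of_nat j)).
Definition Sj j := fsum (fun i => n2 (psi j i)) (Lpsi j).
Definition Lprev j := match j with O => O | S j' => Lpsi j' end.
Definition Xj j := Sj j * (2 ^ j * 2 ^ j * 16).
Definition dd j : nat := S (Z.to_nat (up (Xj j)) + Lprev j).
Fixpoint mm j : nat := match j with O => dd O | S j' => (mm j' + dd (S j'))%nat end.
Definition yv j := Rm n (mm j) (psi j).
Definition FP (P : nat -> bool) idx := csum (fun j => if P j then yv j idx else czero) (S idx).

Lemma Sj_nonneg j : 0 <= Sj j.
Proof. apply fsum_nonneg; intros; apply n2_nonneg. Qed.

Lemma dd_facts j : (1 <= dd j)%nat /\ (Lprev j <= n ^ dd j)%nat /\ Xj j < INR (n ^ dd j).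
Proof. pose proof (Nat.pow_gt_lin_r n (dd j) ltac:(lia)). unfold dd in *. split. lia. split. lia.
 apply Rlt_le_trans with (INR (Z.to_nat (up (Xj j)))). destruct (archimed (Xj j)). pose proof (INR_Zto (up (Xj j))). lra.
 apply le_INR; lia. Qed.

Lemma mm_ge j : (S j <= mm j)%nat.
Proof. induction j as [|j IHj]; simpl. pose proof (dd_facts 0); lia. pose proof (dd_facts (S j)); lia. Qed.


Lemma mm_mono i j : (i < j)%nat -> (mm i + dd (S i) <= mm j)%nat /\ (mm i + dd j <= mm j)%nat.
Proof. revert i; induction j as [|j IHj]; intros i H. lia. simpl. destruct (Nat.eq_dec i j). subst; lia.
 destruct (IHj i) as [H1 H2]. lia. lia. Qed.

Lemma Sj_bound j : Sj j * (2 ^ j * 2 ^ j * 16) <= INR (n ^ dd j).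
Proof. pose proof (dd_facts j) as [_ [_ H]]. unfold Xj in H. lra. Qed.

Lemma psi_supp j a : (Lpsi j <= a)%nat -> psi j a = czero.
Proof. intros; apply phi_supp; auto. Qed.

Lemma yv_low j idx : (idx < j)%nat -> yv j idx = czero.
Proof. intros H. unfold yv. apply R_low; auto. pose proof (mm_ge j). lia.
 pose proof (Nat.pow_gt_lin_r n (mm j - 1) ltac:(lia)). pose proof (mm_ge j). lia. Qed.

Lemma FP_ext P idx K : (S idx <= K)%nat -> FP P idx = csum (fun j => if P j then yv j idx else czero) K.
Proof. intros HK. unfold FP. symmetry. apply csum_beyond; auto. intros j Hj. destruct (P j); auto. apply yv_low; lia. Qed.

Lemma FP_norm P K : fsum (fun idx => n2 (FP P idx)) K <=
  2 * fsum (fun j => if P j then 2 ^ j * (2 / INR (n ^ mm j) * Sj j) else 0) K.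
Proof.
 apply Rle_trans with (fsum (fun idx => 2 * fsum (fun j => 2 ^ j * n2 (if P j then yv j idx else czero)) K) K).
 - apply fsum_le. intros idx Hidx. rewrite (FP_ext P idx K) by lia.
   eapply Rle_trans. apply (cs_weighted _ (fun j => / 2 ^ j)). intros; apply Rinv_0_lt_compat, pow_lt; lra.
   apply Rmult_le_compat. apply fsum_nonneg; intros; left; apply Rinv_0_lt_compat, pow_lt; lra.
   apply fsum_nonneg; intros. apply Rdiv_le_0_compat. apply n2_nonneg. apply Rinv_0_lt_compat, pow_lt; lra.
   apply geom_full. right. apply fsum_ext. intros j _. unfold Rdiv. rewrite Rinv_inv. ring.
 - rewrite fsum_scal. apply Rmult_le_compat_l. lra. rewrite fsum_swap. apply fsum_le. intros j Hj.
   rewrite fsum_scal. destruct (P j).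
   + apply Rmult_le_compat_l. left; apply pow_lt; lra. apply R_norm; auto. pose proof (mm_ge j); lia.
     intros; apply psi_supp; auto.
   + rewrite (fsum_ext _ (fun _ => 0)), fsum_zero. lra. intros; unfold n2, czero; simpl; ring.
Qed.

Lemma term_gen j A : 0 < A -> A * INR (n ^ dd j) <= INR (n ^ mm j) ->
  A * (2 ^ j * (2 / INR (n ^ mm j) * Sj j)) <= / 2 ^ j * / 8.
Proof. intros HA HM. set (D := INR (n ^ dd j)) in *.
 assert (HD : 0 < D) by (apply lt_0_INR; pose proof (pow_pos n (dd j)); lia).
 pose proof (Sj_bound j) as HS. fold D in HS. pose proof (Sj_nonneg j).
 assert (H2j : 0 < 2 ^ j) by (apply pow_lt; lra).
 apply Rle_trans with (A * (2 ^ j * (2 / (A * D) * Sj j))).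
 - apply Rmult_le_compat_l; [lra|]. apply Rmult_le_compat_l; [lra|]. apply Rmult_le_compat_r; auto.
   unfold Rdiv. apply Rmult_le_compat_l; [lra|]. apply Rinv_le_contravar. apply Rmult_lt_0_compat; auto. auto.
 - replace (A * (2 ^ j * (2 / (A * D) * Sj j))) with (2 * (2 ^ j * Sj j) / D) by (field; split; nz).
   apply div_le; auto.
   replace (/ 2 ^ j * / 8 * D) with (D / (2 ^ j * 8)) by (field; nz).
   apply Rmult_le_reg_r with (2 ^ j * 8). nra.
   replace (D / (2 ^ j * 8) * (2 ^ j * 8)) with D by (field; nz). nra.
Qed.

Lemma term_bound i j : (i < j)%nat ->
  INR (n ^ mm i) * (2 ^ j * (2 / INR (n ^ mm j) * Sj j)) <= / 2 ^ j * / 8.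
Proof. intros H. destruct (mm_mono i j H) as [_ H2]. apply term_gen.
 apply lt_0_INR; pose proof (pow_pos n (mm i)); lia.
 rewrite <- mult_INR, <- Nat.pow_add_r. apply pow_mono; lia. Qed.

Lemma mm_ge_dd j : (dd j <= mm j)%nat.
Proof. destruct j; simpl; lia. Qed.

Lemma term0 j : 2 ^ j * (2 / INR (n ^ mm j) * Sj j) <= / 2 ^ j * / 8.
Proof. rewrite <- (Rmult_1_l (2 ^ j * _)). apply term_gen. lra. rewrite Rmult_1_l.
 apply pow_mono. lia. apply mm_ge_dd. Qed.

Definition xv := FP (fun _ => true).

Lemma xv_inH2 : inH2 xv.
Proof. apply (inH2_psb xv 1). intros K. unfold xv. eapply Rle_trans. apply FP_norm.
 apply Rle_trans with (2 * fsum (fun j => / 8 * / 2 ^ j) K).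
 apply Rmult_le_compat_l. lra. apply fsum_le. intros j _. replace (/ 8 * / 2 ^ j) with (/ 2 ^ j * / 8) by ring. apply term0.
 rewrite fsum_scal. pose proof (geom_full K). lra. Qed.

Lemma csum_last f i : (forall j, (j < i)%nat -> f j = czero) -> csum f (S i) = f i.
Proof. intros H. unfold csum; apply C_eq; simpl;
 rewrite (fsum_ext _ (fun _ => 0)), fsum_zero; try ring; intros j Hj; rewrite H; auto. Qed.

Lemma hyper_est g : inH2 g -> forall eps, 0 < eps -> exists k, h2dist (Tk n k xv) g < eps.
Proof. intros Hg eps He.
 assert (E : 0 < eps ^ 2) by (apply pow_lt; lra).
 destruct (phi_dense g Hg (eps ^ 2 / 8)) as [c Hc]. lra.
 destruct (pow_big 2 (8 / eps ^ 2)) as [c0 Hc0]. lia.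
 rewrite pow_INR in Hc0. replace (INR 2) with 2 in Hc0 by (simpl; ring).
 set (i := to_nat (c, c0)).
 assert (Hpsi : psi i = phi c) by (unfold psi, i; rewrite cancel_of_to; auto).
 assert (Hic : (c0 <= i)%nat) by (pose proof (to_nat_non_decreasing c c0); unfold i; lia).
 exists (mm i).
 set (A := fun idx => csum (fun j => yv j idx) (S i)).
 set (t := FP (fun j => Nat.ltb i j)).
 assert (Hx : xv = fun idx => Cplus (A idx) (t idx)).
 { apply functional_extensionality; intros idx. unfold xv, t.
   rewrite (FP_ext _ idx (S idx + S i)) by lia. rewrite (FP_ext _ idx (S idx + S i)) by lia.
   assert (EA : A idx = csum (fun j => if Nat.ltb j (S i) then yv j idx else czero) (S idx + S i)).
   { unfold A. rewrite (csum_beyond _ (S i) (S idx + S i)).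
     unfold csum; apply C_eq; cbn [fst snd]; apply fsum_ext; intros j Hj; destruct (Nat.ltb_spec j (S i)); auto; lia.
     intros j Hj. destruct (Nat.ltb_spec j (S i)); auto; lia. lia. }
   rewrite EA. rewrite <- csum_plus. unfold csum; apply C_eq; cbn [fst snd]; apply fsum_ext; intros j _;
   destruct (Nat.ltb_spec j (S i)); destruct (Nat.ltb_spec i j); try lia; unfold czero; simpl; ring. }
 assert (HA : Tk n (mm i) A = psi i).
 { apply functional_extensionality; intros a. unfold A. rewrite Tk_csum.
   rewrite csum_last. unfold yv. rewrite TkR; auto. pose proof (mm_ge i); lia.
   intros j Hj. destruct (mm_mono j i Hj) as [H1 _].
   replace (mm i) with ((mm i - mm j) + mm j)%nat by lia. rewrite Tk_comp. unfold yv. rewrite TkR; auto.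
   2: pose proof (mm_ge j); lia.
   rewrite (annih n _ (psi j) (Lpsi j)); auto. intros; apply psi_supp; auto. apply phi_sum.
   destruct (dd_facts (S j)) as [_ [H3 _]]. simpl in H3.
   apply Nat.le_trans with (n ^ dd (S j))%nat; auto. apply Nat.pow_le_mono_r; lia. lia. }
 assert (TT : forall M, fsum (fun a => n2 (Tk n (mm i) t a)) M <= / 2 ^ i * / 4).
 { intros M. set (N := (n ^ mm i)%nat).
   apply Rle_trans with (fsum (fun a => INR N * fsum (fun l => n2 (t (a * N + l)%nat)) N) M).
   apply fsum_le; intros a _. unfold Tk. fold N. eapply Rle_trans. apply cs_uniform.
   right. f_equal. apply fsum_ext; intros; rewrite Nat.mul_comm; auto.
   rewrite fsum_scal, (fsum_regroup (fun k => n2 (t k)) N M). unfold t. eapply Rle_trans. apply Rmult_le_compat_l. apply pos_INR. apply FP_norm.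
   rewrite <- Rmult_assoc, (Rmult_comm (INR N) 2), Rmult_assoc, <- fsum_scal. cbv beta.
   apply Rle_trans with (2 * fsum (fun j => / 8 * (if Nat.ltb i j then / 2 ^ j else 0)) (M * N)).
   apply Rmult_le_compat_l. lra. apply fsum_le; intros j _. destruct (Nat.ltb_spec i j).
   replace (/ 8 * / 2 ^ j) with (/ 2 ^ j * / 8) by ring. apply term_bound; auto. lra.
   rewrite fsum_scal. pose proof (geom_tail i (M * N)). lra. }
 rewrite Hx, Tk_plus, HA, Hpsi.
 assert (Hi2 : / 2 ^ i <= / 2 ^ c0).
 { apply Rinv_le_contravar. apply pow_lt; lra. apply Rle_pow; lra || lia. }
 assert (Hc02 : / 2 ^ c0 < eps ^ 2 / 8).
 { replace (eps ^ 2 / 8) with (/ (8 / eps ^ 2)) by (field; nz).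
   apply Rinv_lt_contravar. apply Rmult_lt_0_compat. apply Rdiv_lt_0_compat; lra. apply pow_lt; lra. exact Hc0. }
 apply (dist_psb _ _ (eps ^ 2 / 4 + / 2 ^ i * / 2)); auto. lra.
 intros K. apply Rle_trans with (fsum (fun a => 2 * n2 (Cminus (phi c a) (g a)) + 2 * n2 (Tk n (mm i) t a)) K).
 apply fsum_le; intros a _. rewrite minus_plus_C. apply n2_plus_le.
 rewrite fsum_plus, !fsum_scal. specialize (Hc K). specialize (TT K). lra.
Qed.
End Hyper.

Theorem mainTheorem1 :
  forall (n : nat), (2 <= n)%nat ->
  forall Wstar : (nat -> C) -> (nat -> C),
    is_adjoint_H2 (W n) Wstar ->
    mixing Wstar /\ hypercyclic Wstar.
Proof.
 intros n Hn Wstar Hadj. split. apply (mixing_main n); auto.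
 exists (xv n). split. apply xv_inH2; auto. intros g Hg eps He.
 destruct (hyper_est n Hn g Hg eps He) as [k Hk]. exists k.
 destruct (iter_W n Wstar (xv n) ltac:(lia) Hadj (xv_inH2 n Hn) k) as [_ ->]. auto.
Qed.
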